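(* Let $n\ge1$ be an integer and let $\varepsilon,\alpha,C_0,z_0$ be complex constants with $\alpha\neq0$. Then the rational function $$y(z)=\frac{C_0}{\alpha}+\frac{2(-1)^{n-1}(2n-1)!\,\varepsilon}{\alpha\,(n-1)!\,(z+z_0)^n}$$ is a solution of the ordinary differential equation $$\varepsilon\frac{d^ny}{dz^n}+\frac{\alpha}{2}y^2-C_0y+\frac{C_0^2}{2\alpha}=0 .$$ *)

(* Defs.v *)
From HB Require Import structures.
From mathcomp Require Import all_boot all_order all_algebra.
From mathcomp Require Import complex.
From mathcomp Require Import all_classical all_reals all_analysis.

(* Main.v *)
Require Import Defs.
From HB Require Import structures.
From mathcomp Require Import all_boot all_order all_algebra.
From mathcomp Require Import complex.
From mathcomp Require Import all_classical all_reals all_analysis.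
Import Order.TTheory GRing.Theory Num.Theory.
Import numFieldNormedType.Exports.
From mathcomp Require Import ring lra.
Local Open Scope ring_scope.

Section S.
Variable K : numFieldType.

Lemma near_ne {z0 x : K} : x + z0 != 0 -> \forall w \near x, w + z0 != 0.
Proof.
move=> hx; apply/nbhs_ballP; exists `|x + z0|; first by rewrite /= normr_gt0.
move=> w; rewrite -ball_normE /= => hw; apply/eqP => h0.
have hw0 : w = - z0 by rewrite -(addrK z0 w) h0 sub0r.
by move: hw; rewrite hw0 opprK ltxx.
Qed.

Lemma is_derive_u (z0 x : K) : is_derive x (1:K) (fun w : K => w + z0) 1.
Proof.
have := @is_derive_shift K x 1 z0. by [].
Qed.

Lemma is_derive_pinv (z0 a x : K) (m : nat) : x + z0 != 0 ->
  is_derive x (1:K) (fun w : K => a / (w + z0) ^+ m)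
    (a * - m%:R / (x + z0) ^+ m.+1).
Proof.
move=> hx.
have hX : is_derive x (1:K) ((fun w : K => w + z0) ^+ m) ((m%:R * (x + z0) ^+ m.-1) *: 1).
  exact: is_deriveX (is_derive_u z0 x).
have hm : ((fun w : K => w + z0) ^+ m) x != 0.
  by rewrite exprfctE expf_neq0.
case: hX => dX eX.
have dV := derivableV hm dX.
have eV := deriveV hm dX.
rewrite eX in eV.
have -> : (fun w : K => a / (w + z0) ^+ m) = a \*o (fun y => (((fun w : K => w + z0) ^+ m) y)^-1).
  by apply/funext => w /=; rewrite exprfctE.
apply: DeriveDef.
  exact: derivableM.
rewrite deriveMl // eV.
rewrite exprfctE /= [_%:A]mulr1 -mulNrn.
case: m {dX eX dV eV hm} => [|m]; first by rewrite !mulr0n !mul0r ?oppr0 ?scaler0 ?mulr0 ?mul0r.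
set u := x + z0 in hx *.
have hp : u ^+ m != 0 by rewrite expf_neq0.
rewrite /= -[_ *: _]/(_ * _) !exprSr mulNrn.
set p := u ^+ m in hp *.
field.
by rewrite hp hx.
Qed.

Lemma prod_fact (m k : nat) :
  (\prod_(i < k) ((m.+1 + i)%:R : K)) * (m`!)%:R = ((m + k)`!)%:R.
Proof.
elim: k => [|k IH]; first by rewrite big_ord0 mul1r addn0.
rewrite big_ord_recr /= mulrAC IH -natrM addnS factS mulnC.
by congr (_ %:R); rewrite [in RHS]mulnC addSn.
Qed.

Variables (n : nat) (eps alpha C0 z0 : K).
Definition A := 2 * (-1) ^+ n.-1 * (n.*2.-1)`!%:R * eps / (alpha * (n.-1)`!%:R).
Definition c k : K := (-1) ^+ k * \prod_(i < k) ((n + i)%:R : K).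
Definition g k (w : K) := (if k == 0%N then C0 / alpha else 0) + A * c k / (w + z0) ^+ (n + k).

Lemma step (k : nat) x : x + z0 != 0 -> is_derive x (1:K) (g k) (g k.+1 x).
Proof.
move=> hx.
have := is_deriveD (is_derive_cst (if k == 0%N then C0 / alpha else 0) x 1)
   (@is_derive_pinv z0 (A * c k) x (n + k)%N hx).
rewrite /g /= add0r addnS /c big_ord_recr /= exprS.
move=> H.
suff E : A * ((-1) ^+ k * \prod_(i < k) (n + i)%:R) * (1 *- (n + k)) =
  A * ((-1) ^+ k.+1 * (\prod_(i < k) (n + i)%:R * (n + k)%:R)).
  by rewrite add0r -E.
rewrite exprS; ring.
Qed.

Definition Y (z : K) := C0 / alpha
    + (2 * (-1) ^+ n.-1 * (n.*2.-1)`!%:R * eps)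
      / (alpha * (n.-1)`!%:R * (z + z0) ^+ n).

Lemma near_g (k : nat) : alpha != 0 -> forall w, w + z0 != 0 ->
  \forall x \near w, derive1n k Y x = g k x.
Proof.
move=> ha; elim: k => [|k IH] w hw.
  apply: filterS (near_ne hw) => x hx /=.
  rewrite /Y /g /A /c big_ord0 expr0 mul1r addn0 mulr1.
  have hF : ((n.-1)`!%:R : K) != 0 by rewrite pnatr_eq0 -lt0n fact_gt0.
  have hu : (x + z0) ^+ n != 0 by rewrite expf_neq0.

  by rewrite eqxx; field; rewrite ha hF hu.
apply: filterS (near_ne hw) => x hx.
rewrite derive1nS derive1E.
rewrite (near_eq_derive _ (IH x hx)).
by rewrite (@derive_val _ _ _ _ _ _ _ (step k x hx)).
Qed.
End S.

(* Complex numbers are modelled as R[i] = complex R for R : realType;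
   derivatives are complex derivatives (scalars in R[i]). *)
Theorem mainTheorem5 (R : realType) (n : nat) (eps alpha C0 z0 : R[i])
  (hn : (1 <= n)%N) (halpha : alpha != 0) :
  let y : (R[i] : numFieldType) -> (R[i] : numFieldType) := fun z =>
    C0 / alpha
    + (2 * (-1) ^+ n.-1 * (n.*2.-1)`!%:R * eps)
      / (alpha * (n.-1)`!%:R * (z + z0) ^+ n) in
  forall z : (R[i] : numFieldType), z + z0 != 0 ->
    (forall k, (k < n)%N -> derivable (derive1n k y) z 1) /\
    eps * derive1n n y z + alpha / 2 * y z ^+ 2 - C0 * y z
      + C0 ^+ 2 / (2 * alpha) = 0.
Proof.
move=> y z hz.
have yE : y = Y _ n eps alpha C0 z0 by [].
rewrite yE.
have hnear := fun k => @near_g _ n eps alpha C0 z0 k halpha z hz.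
split.
  move=> k _.
  apply: (near_eq_derivable (f := g _ n eps alpha C0 z0 k)).
    by apply: filterS (hnear k) => x ->.
  exact: (@ex_derive _ _ _ _ _ _ _ (step _ n eps alpha C0 z0 k z hz)).
have h0 : Y _ n eps alpha C0 z0 z = g _ n eps alpha C0 z0 0%N z := nbhs_singleton (hnear 0%N).
rewrite (nbhs_singleton (hnear n)) h0.
case: n hn {yE y hnear} h0 => [//|m] _ _.
rewrite /g /c /A /= big_ord0 expr0 mul1r addn0 mulr1.
have hP := prod_fact R[i] m m.+1.
have e2 : (m.+1.*2.-1)`! = (m + m.+1)`! by rewrite addnS addnn.
rewrite e2 -hP.
have hF : ((m`!)%:R : R[i]) != 0 by rewrite pnatr_eq0 -lt0n fact_gt0.
have hv : (z + z0) ^+ m.+1 != 0 by rewrite expf_neq0.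
rewrite exprD exprS.
set P := \prod_(_ < _) _.
set F := (m`!)%:R.
set v := (z + z0) ^+ m.+1.
field.
by rewrite halpha hF hv.
Qed.
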